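(* Let $d\in\mathbb{Z}_{\ge1}$ and $\gamma\in\mathbb{Z}_{\ge2}$. If integers $y(\ell),x^{\mathrm{bin}}(\ell),z(\ell)$ ($0\le\ell\le d-1$), $r(\ell)$ ($0\le\ell\le d$) form a solution of the constraint system $\mathcal{S}(d,\gamma)$, then $r(d)=\gamma^i$ for some integer $i$ with $1\le i\le 2^d-1$. Equivalently, if $r(d)$ is not of the form $\gamma^i$ with $i\in\mathbb{Z}_{\ge1}$, the system $\mathcal{S}(d,\gamma)$ has no integer solution with this value of $r(d)$.
   Context: Constraint system $\mathcal{S}(d,\gamma)$: for given integers $d\ge1$, $\gamma\ge2$, integer variables $y(\ell),x^{\mathrm{bin}}(\ell),z(\ell)$ for $\ell\in\{0,\dots,d-1\}$ and $r(\ell)$ for $\ell\in\{0,\dots,d\}$, subject to, for every $\ell\in\{0,\dots,d-1\}$ (writing $g_\ell:=\gamma^{2^\ell}$): (C1) $y(\ell)\ge0$; (C2) $y(\ell)\le r(\ell+1)/g_\ell+1/(g_\ell+1)$; (C3) $y(\ell)\ge r(\ell+1)/g_\ell-(g_\ell-1)/g_\ell$; (C4) $x^{\mathrm{bin}}(\ell)\ge0$; (C5) $x^{\mathrm{bin}}(\ell)\le1$; (C6) $x^{\mathrm{bin}}(\ell)\le y(\ell)$; (C7) $y(\ell)\le(g_\ell+1)x^{\mathrm{bin}}(\ell)$; (C8) $r(\ell)\ge0$; (C9) $(g_\ell-1)z(\ell)+r(\ell)=r(\ell+1)$; (C10) $z(\ell)\ge0$; (C11) $z(\ell)\ge -g_\ell+g_\ell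 x^{\mathrm{bin}}(\ell)+r(\ell)$; (C12) $z(\ell)\le g_\ell x^{\mathrm{bin}}(\ell)$; (C13) $z(\ell)\le r(\ell)$; and additionally $r(0)=1$, $r(d)\ge2$, $r(d)\le\gamma^{2^d-1}$. *)

(* Defs.v *)
From mathcomp Require Import all_boot all_order all_algebra.
Set Implicit Arguments. Unset Strict Implicit. Unset Printing Implicit Defensive.
Import Order.TTheory GRing.Theory Num.Theory.
Local Open Scope ring_scope.

Definition gpow (gamma : int) (l : nat) : int := gamma ^+ (2 ^ l)%N.

Definition toQ (a : int) : rat := a%:~R.

(* The constraint system S(d, gamma) for integer sequences y, xbin, z
   (indices 0..d-1) and r (indices 0..d). Values outside these index
   ranges are irrelevant. *)
Definition system_S (d : nat) (gamma : int)
  (y xbin z r : nat -> int) : Prop :=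
  (forall l : nat, (l < d)%N ->
     let g := gpow gamma l in
        (0 <= y l)
     /\ (toQ (y l) <= toQ (r l.+1) / toQ g + 1 / (toQ g + 1))
     /\ (toQ (y l) >= toQ (r l.+1) / toQ g - (toQ g - 1) / toQ g)
     /\ (0 <= xbin l)
     /\ (xbin l <= 1)
     /\ (xbin l <= y l)
     /\ (y l <= (g + 1) * xbin l)
     /\ (0 <= r l)
     /\ ((g - 1) * z l + r l = r l.+1)                              (* C9 *)
     /\ (0 <= z l)
     /\ (z l >= - g + g * xbin l + r l)                             (* C11 *)
     /\ (z l <= g * xbin l)                                         (* C12 *)
     /\ (z l <= r l))                                               (* C13 *)
  /\ r 0%N = 1
  /\ 2 <= r d
  /\ r d <= gamma ^+ (2 ^ d - 1)%N.

(* Main.v *)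
Require Import Defs.
From mathcomp Require Import all_boot all_order all_algebra.
From mathcomp Require Import zify ring.
Import Order.TTheory GRing.Theory Num.Theory.
Local Open Scope ring_scope.

Lemma step (g x z rl rl1 : int) :
  0 <= x -> x <= 1 -> (g - 1) * z + rl = rl1 -> 0 <= z ->
  z >= - g + g * x + rl -> z <= g * x -> z <= rl ->
  rl1 = rl \/ rl1 = g * rl.
Proof.
move=> h0 h1 e hz h11 h12 h13.
have [ex|ex] : x = 0 \/ x = 1 by lia.
- rewrite ex mulr0 in h12 h11.
  have ez : z = 0 by lia.
  left; rewrite -e ez; ring.
- rewrite ex mulr1 in h12 h11.
  have ez : z = rl by lia.
  right; rewrite -e ez; ring.
Qed.

Theorem mainTheorem8 (d : nat) (gamma : int) (y xbin z r : nat -> int) :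
  (1 <= d)%N -> 2 <= gamma ->
  system_S d gamma y xbin z r ->
  exists i : nat, (1 <= i <= 2 ^ d - 1)%N /\ r d = gamma ^+ i.
Proof.
move=> hd hg [H [r0 [r2 _]]].
have key : forall l, (l <= d)%N -> exists i : nat, (i <= 2 ^ l - 1)%N /\ r l = gamma ^+ i.
  elim=> [|l IH] hl.
    by exists 0%N; rewrite r0 expr0.
  have hl' : (l < d)%N by [].
  have [i [hi ei]] := IH (ltnW hl).
  have [_ [_ [_ [h4 [h5 [_ [_ [_ [h9 [h10 [h11 [h12 h13]]]]]]]]]]]] := H l hl'.
  have [e|e] := @step _ _ _ _ _ h4 h5 h9 h10 h11 h12 h13.
    exists i; split; last by rewrite e.
    apply: (leq_trans hi); rewrite leq_sub2r // leq_exp2l //.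
  exists (2 ^ l + i)%N; split.
    rewrite expnS mul2n -addnn.
    have : (0 < 2 ^ l)%N by rewrite expn_gt0.
    lia.
  by rewrite e ei exprD /gpow.
have [i [hi ei]] := key d (leqnn d).
exists i; split => //.
case: i hi ei => [|i] hi ei //.
by move: r2; rewrite ei expr0.
Qed.
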